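(* Let $E_t$ be the set of the first $m_t$ edges of a temporal graph stream, $M$ a temporal motif with $3$ edges, $\delta\ge0$, $q\in(0,1]$, and $r$ an integer with $1\le r\le m_t$. Let $\widehat E_t$ be a uniformly random $r$-element subset of $E_t$, let $(\omega_{e,g})_{e\in E_t,g\in E(e)}$ be independent Bernoulli($q$) variables independent of $\widehat E_t$, and let $$\widehat C_{M,t}=\frac{m_t}{rq}\sum_{e\in\widehat E_t}\sum_{g\in E(e)}\omega_{e,g}\,\eta(W_{e,g}).$$ Then $\mathrm{Var}[\widehat C_{M,t}]\le\frac{m_t-rq}{rq}\,C_{M,t}^2$.
   Context: A temporal graph stream is a sequence of temporal edges $(u,v,t)$ (directed edge from vertex $u$ to vertex $v$ with timestamp $t\in\mathbb{R}^+$, timestamps pairwise distinct) arriving in increasing order of timestamp; $E_t$ is the set of the $m_t$ edges with timestamp at most $t$. A temporal motif $M$ is an ordered sequence of $l$ directed edges $\langle e'_1=(u'_1,v'_1),\dots,e'_l=(u'_l,v'_l)\rangle$ on a vertex set $V_M$ whose underlying graph is connected; here $l=3$. A sequence $\langle (w_1,x_1,t_1),\dots,(w_l,x_l,t_l)\rangle$ of edges with $t_1<\dots<t_l$ is a $\delta$-instance of $M$ if there is a bijection $f$ from its vertices to $V_M$ with $f(w_i)=u'_i$, $f(x_i)=v'_i$ for all $i$, and $t_l-t_1\le\delta$. $C_{M,t}$ is the number of $\delta$-instances of $M$ among the edges of $E_t$. For $e\in E_t$, $\eta(e)$ denotes the number of $\delta$-instances of $M$ whose last (third) edge is $e$. Wedge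 data: for each edge $e$ there is a finite set $E(e)$ of earlier edges and for each $g\in E(e)$ a nonnegative integer $\eta(W_{e,g})$ (the number of $\delta$-instances of $M$ containing the temporal wedge formed by $e$ and $g$, with $e$ mapped to $e'_3$), such that $\sum_{g\in E(e)}\eta(W_{e,g})=\eta(e)$. *)

(* Defs.v *)
From HB Require Import structures.
From mathcomp Require Import all_boot all_order all_algebra.
From mathcomp Require Import boolp.
Set Implicit Arguments. Unset Strict Implicit. Unset Printing Implicit Defensive.
Import Order.TTheory GRing.Theory Num.Theory.
Local Open Scope ring_scope.

(* Temporal edges of E_t: indexed by 'I_m, edge i = (src i, dst i, time i).
   Temporal motif with 3 edges: (mu k, mv k), k : 'I_3, on vertex type VM;
   V_M is the set of endpoints of these edges. *)

Definition motif_adj (VM : finType) (mu mv : 'I_3 -> VM) : rel VM :=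
  fun a b => [exists k : 'I_3, ((mu k == a) && (mv k == b)) || ((mu k == b) && (mv k == a))].

Definition motif_connected (VM : finType) (mu mv : 'I_3 -> VM) : Prop :=
  forall k l : 'I_3, connect (motif_adj mu mv) (mu k) (mu l).

Definition is_delta_instance (R : realDomainType) (V : eqType) (VM : finType)
  (m : nat) (src dst : 'I_m -> V) (time : 'I_m -> R)
  (mu mv : 'I_3 -> VM) (delta : R) (s : {ffun 'I_3 -> 'I_m}) : Prop :=
  (forall i j : 'I_3, (i < j)%N -> time (s i) < time (s j)) /\
  time (s ord_max) - time (s ord0) <= delta /\
  exists f : V -> VM,
    (forall k : 'I_3, f (src (s k)) = mu k /\ f (dst (s k)) = mv k) /\
    (forall a b : V,
        (exists k : 'I_3, a = src (s k) \/ a = dst (s k)) ->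
        (exists k : 'I_3, b = src (s k) \/ b = dst (s k)) ->
        f a = f b -> a = b).

Definition motif_count (R : realDomainType) (V : eqType) (VM : finType)
  (m : nat) (src dst : 'I_m -> V) (time : 'I_m -> R)
  (mu mv : 'I_3 -> VM) (delta : R) : nat :=
  #|[set s : {ffun 'I_3 -> 'I_m} | `[< is_delta_instance src dst time mu mv delta s >] ]|.

Definition eta_last (R : realDomainType) (V : eqType) (VM : finType)
  (m : nat) (src dst : 'I_m -> V) (time : 'I_m -> R)
  (mu mv : 'I_3 -> VM) (delta : R) (e : 'I_m) : nat :=
  #|[set s : {ffun 'I_3 -> 'I_m} |
      `[< is_delta_instance src dst time mu mv delta s >] && (s ord_max == e)]|.

(* Finite probability space: a random subset hatE of E_t together with a
   family omega of Bernoulli variables indexed by pairs (e,g)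
   (only pairs with g in E(e) are used; the others are independent extras). *)
Definition outcome (m : nat) : finType :=
  ({set 'I_m} * {ffun ('I_m * 'I_m) -> bool})%type.

Definition prob (R : realFieldType) (m r : nat) (q : R) (o : outcome m) : R :=
  ((#|o.1| == r)%:R / ('C(m, r))%:R) *
  \prod_(p : 'I_m * 'I_m) (if o.2 p then q else 1 - q).

Definition expect (R : realFieldType) (m r : nat) (q : R) (X : outcome m -> R) : R :=
  \sum_(o : outcome m) prob r q o * X o.

Definition variance (R : realFieldType) (m r : nat) (q : R) (X : outcome m -> R) : R :=
  expect r q (fun o => (X o - expect r q X) ^+ 2).

Definition estimator (R : realFieldType) (m r : nat) (q : R)
  (Eset : 'I_m -> {set 'I_m}) (etaW : 'I_m -> 'I_m -> nat) (o : outcome m) : R :=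
  (m%:R / (r%:R * q)) *
  \sum_(e in o.1) \sum_(g in Eset e) (o.2 (e, g))%:R * (etaW e g)%:R.

(* Main.v *)
Require Import Defs.
From HB Require Import structures.
From mathcomp Require Import all_boot all_order all_algebra all_fingroup.
From mathcomp Require Import boolp.
From mathcomp Require Import ring lra.
Import Order.TTheory GRing.Theory Num.Theory.
Local Open Scope ring_scope.
Set Implicit Arguments. Unset Strict Implicit.

Definition pS (R : realFieldType) (m r : nat) (S : {set 'I_m}) : R :=
  (#|S| == r)%:R / ('C(m, r))%:R.
Definition pw (R : realFieldType) (m : nat) (q : R) (w : {ffun 'I_m * 'I_m -> bool}) : R :=
  \prod_(p : 'I_m * 'I_m) (if w p then q else 1 - q).
Arguments pS {R m} r S.
Arguments pw {R m} q w.

Lemma expect_split (R : realFieldType) m r (q : R) (F : {set 'I_m} -> R)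
  (G : {ffun 'I_m * 'I_m -> bool} -> R) :
  expect r q (fun o => F o.1 * G o.2) =
  (\sum_S pS r S * F S) * (\sum_w pw q w * G w).
Proof.
rewrite /expect -(pair_big xpredT xpredT (fun S w => prob r q (S, w) * (F (S,w).1 * G (S,w).2))) /=.
rewrite big_distrl /=; apply: eq_bigr => S _.
rewrite big_distrr /=; apply: eq_bigr => w _.
rewrite /prob /pS /pw /=; ring.
Qed.

Lemma expectZ (R : realFieldType) m r (q : R) c (F : outcome m -> R) :
  expect r q (fun o => c * F o) = c * expect r q F.
Proof. rewrite /expect big_distrr; apply: eq_bigr => o _; exact: mulrCA. Qed.

Lemma expect_sum (R : realFieldType) m r (q : R) (I : finType) (F : I -> outcome m -> R) :
  expect r q (fun o => \sum_i F i o) = \sum_i expect r q (F i).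
Proof.
rewrite /expect (exchange_big) /=; apply: eq_bigr => o _; rewrite big_distrr //.
Qed.

Lemma sum_pS (R : realFieldType) m r : (r <= m)%N -> \sum_(S : {set 'I_m}) pS r S = 1 :> R.
Proof.
move=> hrm; rewrite /pS -big_distrl /=.
have -> : \sum_(S : {set 'I_m}) ((#|S| == r)%:R : R) = (#|[set S : {set 'I_m} | #|S| == r]|)%:R.
  rewrite -sum1_card natr_sum [RHS]big_mkcond /=; apply: eq_bigr => S _.
  by rewrite inE; case: (#|S| == r).
rewrite card_draws card_ord divff // pnatr_eq0 -lt0n bin_gt0 //.
Qed.

Lemma sum_pw (R : realFieldType) m (q : R) (P : {set 'I_m * 'I_m}) :
  \sum_w pw q w * \prod_(x in P) ((w x)%:R : R) = q ^+ #|P|.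
Proof.
transitivity (\prod_(x : 'I_m * 'I_m) \sum_(b : bool)
   ((if b then q else 1 - q) * (if x \in P then (b%:R : R) else 1))).
  rewrite bigA_distr_bigA /=; apply: eq_bigr => w _.
  rewrite /pw [X in _ * X]big_mkcond /= -big_split /=; apply: eq_bigr => x _.
  by case: (x \in P).
rewrite -prodr_const [RHS]big_mkcond /=; apply: eq_bigr => x _.
rewrite big_bool /=; case: (x \in P) => /=; ring.
Qed.

Lemma sum_ind (T : finType) (A : {set T}) (R : realFieldType) :
  \sum_(x : T) ((x \in A)%:R : R) = #|A|%:R.
Proof.
rewrite -sum1_card natr_sum [RHS]big_mkcond /=; apply: eq_bigr => x _.
by case: (x \in A).
Qed.

Lemma ES (R : realFieldType) m r (e : 'I_m) : (r <= m)%N ->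
  \sum_(S : {set 'I_m}) pS r S * ((e \in S)%:R : R) = r%:R / m%:R.
Proof.
move=> hrm.
pose g (e : 'I_m) := \sum_(S : {set 'I_m}) pS r S * ((e \in S)%:R : R).
have sym : forall e e', g e = g e'.
  move=> e1 e2; rewrite /g (reindex_inj (imset_inj (@perm_inj _ (tperm e1 e2)))) /=.
  apply: eq_bigr => S _; rewrite /pS card_imset; last exact: perm_inj.
  by rewrite -{1}(tpermR e1 e2) mem_imset //; exact: perm_inj.
have tot : \sum_(e' : 'I_m) g e' = r%:R.
  rewrite /g exchange_big /=.
  transitivity (\sum_(S : {set 'I_m}) pS r S * (r%:R : R)).
    apply: eq_bigr => S _; rewrite -big_distrr /= sum_ind /pS.
    by case: eqP => [->|_] //; rewrite !mul0r.
  by rewrite -big_distrl /= sum_pS // mul1r.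
have : \sum_(e' : 'I_m) g e' = g e *+ m.
  by rewrite (eq_bigr (fun _ => g e)) ?sumr_const ?card_ord // => e' _; apply: sym.
rewrite tot => ->; rewrite -mulr_natr mulfK // pnatr_eq0.
by case: m e {hrm g sym tot} => [[]|].
Qed.

Lemma Eone (R : realFieldType) m r (q : R) : (r <= m)%N ->
  expect r q (fun _ : outcome m => 1) = 1.
Proof.
move=> hrm.
have := expect_split r q (fun _ => 1) (fun _ => 1).
rewrite /= mulr1 => ->.
have := sum_pw q (set0 : {set 'I_m * 'I_m}).
rewrite cards0 expr0 => H.
have hS : \sum_(S : {set 'I_m}) pS r S * 1 = 1 :> R.
  by rewrite (eq_bigr (fun S => pS r S)) ?sum_pS // => S _; rewrite mulr1.
rewrite hS mul1r; apply: etrans H; apply: eq_bigr => w _; by rewrite big_set0.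
Qed.

Lemma EZ (R : realFieldType) m r (q : R) (e g : 'I_m) : (r <= m)%N ->
  expect r q (fun o => ((e \in o.1)%:R : R) * (o.2 (e, g))%:R) = r%:R / m%:R * q.
Proof.
move=> hrm.
rewrite (expect_split r q (fun S => ((e \in S)%:R : R)) (fun w => (w (e, g))%:R)) ES //.
have := sum_pw q [set (e, g)]; rewrite cards1 expr1 => H.
congr (_ * _); apply: eq_trans H; apply: eq_bigr => w _; by rewrite big_set1.
Qed.

Lemma var_eq (R : realFieldType) m r (q : R) (X : outcome m -> R) :
  expect r q (fun _ : outcome m => 1) = 1 ->
  variance r q X = expect r q (fun o => X o ^+ 2) - (expect r q X) ^+ 2.
Proof.
move=> h1; rewrite /variance /expect.
set mu := \sum_o prob r q o * X o.
transitivity (\sum_o (prob r q o * X o ^+ 2 - (2 * mu) * (prob r q o * X o)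
    + mu ^+ 2 * (prob r q o * 1))).
  by apply: eq_bigr => o _; ring.
rewrite big_split sumrB /= -!big_distrr /= -/mu.
move: h1; rewrite /expect => ->; ring.
Qed.

Lemma prob_ge0 (R : realFieldType) m r (q : R) (o : outcome m) :
  0 <= q -> q <= 1 -> 0 <= prob r q o.
Proof.
move=> q0 q1; rewrite /prob; apply: mulr_ge0.
  by apply: divr_ge0; apply: ler0n.
apply: prodr_ge0 => p _; case: (o.2 p) => //; by rewrite subr_ge0.
Qed.

Lemma expect_ext (R : realFieldType) m r (q : R) (X Y : outcome m -> R) :
  (forall o, X o = Y o) -> expect r q X = expect r q Y.
Proof. by move=> h; apply: eq_bigr => o _; rewrite h. Qed.

Lemma b1 (R : realFieldType) (b : bool) : (b%:R : R) <= 1.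
Proof. by rewrite -[1]/(1%:R) ler_nat leq_b1. Qed.

Lemma main_abstract (R : realFieldType) m r (q : R)
  (Eset : 'I_m -> {set 'I_m}) (etaW : 'I_m -> 'I_m -> nat) :
  0 < q -> q <= 1 -> (1 <= r)%N -> (r <= m)%N ->
  variance r q (estimator r q Eset etaW)
    <= (m%:R - r%:R * q) / (r%:R * q)
       * (\sum_e \sum_(g in Eset e) ((etaW e g)%:R : R)) ^+ 2.
Proof.
move=> q0 q1 r1 rm.
have m0 : (m%:R : R) != 0 by rewrite pnatr_eq0 -lt0n (leq_trans r1 rm).
have r0 : (r%:R : R) != 0 by rewrite pnatr_eq0 -lt0n.
have qn0 : q != 0 by rewrite gt_eqF.
set K := m%:R / (r%:R * q).
pose a (e g : 'I_m) : R := (g \in Eset e)%:R * (etaW e g)%:R.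
pose Z (o : outcome m) (e g : 'I_m) : R := (e \in o.1)%:R * (o.2 (e, g))%:R.
set C := \sum_e \sum_(g in Eset e) ((etaW e g)%:R : R).
have Ceq : C = \sum_e \sum_g a e g.
  apply: eq_bigr => e _; rewrite big_mkcond /=; apply: eq_bigr => g _.
  by rewrite /a; case: (g \in Eset e); rewrite /= ?mul1r ?mul0r.
have Xeq : forall o, estimator r q Eset etaW o = K * \sum_e \sum_g a e g * Z o e g.
  move=> o; rewrite /estimator; congr (_ * _).
  rewrite big_mkcond /=; apply: eq_bigr => e _; rewrite /Z.
  case: (e \in o.1) => /=.
    rewrite big_mkcond /=; apply: eq_bigr => g _; rewrite /a.
    by case: (g \in Eset e); case: (o.2 (e, g)); rewrite /= ?mul1r ?mul0r ?mulr1 ?mulr0.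
  by rewrite big1 // => g _; rewrite mul0r mulr0.
have K0 : 0 <= K by apply: divr_ge0; [apply: ler0n | apply: mulr_ge0; [apply: ler0n | apply: ltW]].
have a0 : forall e g, 0 <= a e g by move=> e g; apply: mulr_ge0; apply: ler0n.
have Z0 : forall o e g, 0 <= Z o e g by move=> o e g; apply: mulr_ge0; apply: ler0n.
have Z1 : forall o e g, Z o e g <= 1 by move=> o e g; apply: mulr_ile1; rewrite ?ler0n ?b1.
set X := estimator r q Eset etaW.
have X0 : forall o, 0 <= X o.
  move=> o; rewrite /X Xeq; apply: mulr_ge0 => //.
  by apply: sumr_ge0 => e _; apply: sumr_ge0 => g _; apply: mulr_ge0.
have X1 : forall o, X o <= K * C.
  move=> o; rewrite /X Xeq Ceq; apply: ler_wpM2l => //.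
  by apply: ler_sum => e _; apply: ler_sum => g _; apply: ler_piMr.
have mu : expect r q X = C.
  rewrite (expect_ext r q Xeq).
  rewrite expectZ (expect_sum r q (fun e o => \sum_g a e g * Z o e g)).
  transitivity (K * \sum_e \sum_g a e g * (r%:R / m%:R * q)).
    congr (_ * _); apply: eq_bigr => e _.
    rewrite (expect_sum r q (fun g o => a e g * Z o e g)); apply: eq_bigr => g _.
    by rewrite expectZ /Z EZ.
  rewrite Ceq; transitivity (K * (r%:R / m%:R * q) * \sum_e \sum_g a e g).
    rewrite -[RHS]mulrA; congr (_ * _); rewrite big_distrr; apply: eq_bigr => e _.
    by rewrite big_distrr; apply: eq_bigr => g _; rewrite mulrC.
  have -> : K * (r%:R / m%:R * q) = 1.
    by rewrite /K; field; rewrite m0 r0 qn0.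
  by rewrite mul1r.
have E2 : expect r q (fun o => X o ^+ 2) <= K * C * C.
  have : expect r q (fun o => X o ^+ 2) <= expect r q (fun o => (K * C) * X o).
    apply: ler_sum => o _; apply: ler_wpM2l; first exact: prob_ge0 (ltW q0) q1.
    by rewrite expr2; apply: ler_wpM2r.
  by rewrite expectZ mu.
rewrite var_eq ?Eone // mu.
apply: le_trans (lerB E2 (lexx _)) _.
rewrite le_eqVlt; apply/orP; left; apply/eqP; rewrite /K; field.
by rewrite r0 qn0.
Qed.

Lemma count_split (R : realDomainType) (V : eqType) (VM : finType) (m : nat)
  (src dst : 'I_m -> V) (time : 'I_m -> R) (mu mv : 'I_3 -> VM) (delta : R) :
  motif_count src dst time mu mv delta =
  (\sum_e eta_last src dst time mu mv delta e)%N.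
Proof.
rewrite /motif_count /eta_last -sum1_card.
rewrite (partition_big (fun s : {ffun 'I_3 -> 'I_m} => s ord_max) xpredT) //=.
apply: eq_bigr => e _; rewrite -sum1_card; apply: eq_bigl => s; rewrite !inE //.
Qed.

Unset Implicit Arguments.
Theorem theorem8 (R : realFieldType) (V : eqType) (VM : finType) (m : nat)
  (src dst : 'I_m -> V) (time : 'I_m -> R)
  (mu mv : 'I_3 -> VM) (delta q : R) (r : nat)
  (Eset : 'I_m -> {set 'I_m}) (etaW : 'I_m -> 'I_m -> nat) :
  (forall e, 0 < time e) ->
  injective time ->
  motif_connected mu mv ->
  0 <= delta ->
  0 < q -> q <= 1 ->
  (1 <= r)%N -> (r <= m)%N ->
  (forall e g, g \in Eset e -> time g < time e) ->
  (forall e, (\sum_(g in Eset e) etaW e g)%N = eta_last src dst time mu mv delta e) ->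
  variance r q (estimator r q Eset etaW)
    <= (m%:R - r%:R * q) / (r%:R * q)
       * ((motif_count src dst time mu mv delta)%:R) ^+ 2.
Proof.
move=> _ _ _ _ q0 q1 r1 rm _ heta.
rewrite count_split natr_sum.
have -> : \sum_e ((eta_last src dst time mu mv delta e)%:R : R) =
          \sum_e \sum_(g in Eset e) ((etaW e g)%:R : R).
  by apply: eq_bigr => e _; rewrite -heta natr_sum.
exact: main_abstract.
Qed.
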